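(* Let $p>0$, $q>0$, $\theta\ge 0$, and for $i=1,2$ let $R_i^{\max}>0$ and let $w_i,v_i,\psi_i$ be nonnegative functions, continuous on $[0,R_i^{\max})$ and $C^1$ on $(0,R_i^{\max})$, such that $$w_1'+\tfrac{\theta}{r}w_1\ge v_1^p,\quad v_1'\ge \psi_1,\quad \psi_1'+\tfrac{\theta}{r}\psi_1\ge w_1^q\quad\text{on }(0,R_1^{\max}),$$ $$w_2'+\tfrac{\theta}{r}w_2\le v_2^p,\quad v_2'\le \psi_2,\quad \psi_2'+\tfrac{\theta}{r}\psi_2\le w_2^q\quad\text{on }(0,R_2^{\max}),$$ with $w_i(0)=\mu_i\ge0$, $v_i(0)=m_i\ge0$, $\psi_i(0)=\nu_i\ge0$. If $\mu_1\ge\mu_2$, $m_1\ge m_2$, $\nu_1\ge\nu_2$ and $(\mu_1,m_1,\nu_1)\ne(\mu_2,m_2,\nu_2)$, then $$w_1(r)>w_2(r),\quad v_1(r)>v_2(r),\quad \psi_1(r)>\psi_2(r)\qquad\text{for all }0<r<\min\{R_1^{\max},R_2^{\max}\}.$$ *)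

(* Defs.v *)
From Stdlib Require Import Reals.
Open Scope R_scope.

(* Real power x^p for x >= 0 and p > 0, with the convention 0^p = 0
   (Stdlib's Rpower 0 p = exp (p * ln 0) = 1, which is wrong at 0). *)
Definition rpow (x p : R) : R := if Rle_dec x 0 then 0 else Rpower x p.

Definition cont_on_Ico (f : R -> R) (Rm : R) : Prop :=
  forall x, 0 <= x < Rm ->
    forall eps, 0 < eps -> exists delta, 0 < delta /\
      forall y, 0 <= y < Rm -> Rabs (y - x) < delta -> Rabs (f y - f x) < eps.

Definition C1_on_Ioo (f df : R -> R) (Rm : R) : Prop :=
  (forall x, 0 < x < Rm -> derivable_pt_lim f x (df x)) /\
  (forall x, 0 < x < Rm -> continuity_pt df x).

Definition admissible (f df : R -> R) (Rm : R) : Prop :=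
  (forall x, 0 <= x < Rm -> 0 <= f x) /\ cont_on_Ico f Rm /\ C1_on_Ioo f df Rm.

(* Main.v *)
Require Import Defs.
From Stdlib Require Import Reals Lra Classical.
Open Scope R_scope.

Lemma Rpow_pos x k : 0 < Rpower x k.
Proof. unfold Rpower; apply exp_pos. Qed.

Lemma Fderiv (k x d : R) (D : R -> R) : 0 < x -> derivable_pt_lim D x d ->
  derivable_pt_lim (fun t => Rpower t k * D t) x (Rpower x k * (d + k / x * D x)).
Proof.
  intros Hx HD.
  pose proof (derivable_pt_lim_mult _ _ x _ _ (derivable_pt_lim_power x k Hx) HD) as H.
  assert (E : Rpower x (k-1) * Rpower x 1 = Rpower x k)
    by (rewrite <- Rpower_plus; f_equal; ring).
  rewrite Rpower_1 in E by exact Hx.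
  replace (Rpower x k * (d + k / x * D x)) with
    (k * Rpower x (k - 1) * D x + Rpower x k * d).
  - exact H.
  - rewrite <- E; field; lra.
Qed.

Lemma step (k a b : R) (D dD : R -> R) : 0 <= k -> 0 < a -> a < b ->
  (forall x, a <= x <= b -> derivable_pt_lim D x (dD x)) ->
  (forall x, a < x < b -> dD x + k / x * D x >= 0) -> D a > 0 -> D b > 0.
Proof.
  intros Hk Ha Hab HD Hi Hpos.
  destruct (MVT_cor2 (fun t => Rpower t k * D t)
     (fun t => Rpower t k * (dD t + k / t * D t)) a b Hab) as [c [Hc1 Hc2]].
  { intros c Hc; apply Fderiv; [lra | apply HD; exact Hc]. }
  pose proof (Hi c Hc2) as Hic.
  pose proof (Rpow_pos c k) as Pc. pose proof (Rpow_pos a k) as Pa. pose proof (Rpow_pos b k) as Pb.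
  assert (Rpower c k * (dD c + k / c * D c) * (b - a) >= 0).
  { apply Rle_ge; apply Rmult_le_pos; [apply Rmult_le_pos|]; lra. }
  assert (Rpower a k * D a > 0) by (apply Rmult_lt_0_compat; lra).
  assert (Rpower b k * D b > 0) by lra.
  destruct (Rlt_or_le 0 (D b)) as [h|h]; [lra|].
  assert (Rpower b k * D b <= 0).
  { rewrite <- (Rmult_0_r (Rpower b k)); apply Rmult_le_compat_l; lra. }
  lra.
Qed.

Lemma Rpow_le1 s k : 0 < s <= 1 -> 0 <= k -> Rpower s k <= 1.
Proof.
  intros Hs Hk.
  assert (E : Rpower 1 k = 1) by (unfold Rpower; rewrite ln_1, Rmult_0_r; apply exp_0).
  apply Rle_trans with (Rpower 1 k); [|lra]. apply Rle_Rpower_l; lra.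
Qed.

Lemma near0 (k a : R) (D dD : R -> R) : 0 <= k -> 0 < a ->
  (forall x, 0 < x < a -> derivable_pt_lim D x (dD x)) ->
  (forall x, 0 < x < a -> dD x + k / x * D x > 0) ->
  (forall eps, 0 < eps -> exists d, 0 < d /\ forall y, 0 < y < d -> D y > - eps) ->
  forall r, 0 < r < a -> D r > 0.
Proof.
  intros Hk Ha HD Hi Hn r Hr.
  set (F := fun t => Rpower t k * D t).
  assert (Hinc : forall u v, 0 < u -> u < v -> v < a -> F u < F v).
  { intros u v Hu Huv Hv.
    destruct (MVT_cor2 F (fun t => Rpower t k * (dD t + k / t * D t)) u v Huv)
      as [c [Hc1 Hc2]].
    { intros c Hc; apply Fderiv; [lra | apply HD; lra]. }
    pose proof (Hi c ltac:(lra)) as Hic. pose proof (Rpow_pos c k).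
    assert (Rpower c k * (dD c + k / c * D c) * (v - u) > 0).
    { apply Rmult_lt_0_compat; [apply Rmult_lt_0_compat|]; lra. }
    lra. }
  destruct (Rlt_or_le 0 (D r)) as [h|h]; [lra|exfalso].
  pose proof (Rpow_pos r k) as Pr.
  assert (F r <= 0).
  { unfold F; rewrite <- (Rmult_0_r (Rpower r k)); apply Rmult_le_compat_l; lra. }
  pose proof (Hinc (r/2) r ltac:(lra) ltac:(lra) ltac:(lra)) as H1.
  destruct (Hn (- F (r/2)) ltac:(lra)) as [d [Hd Hy]].
  set (s := Rmin d (Rmin (r/2) 1) / 2).
  assert (Hs1 : 0 < s).
  { unfold s. assert (0 < Rmin d (Rmin (r/2) 1)) by (apply Rmin_pos; [lra| apply Rmin_pos; lra]). lra. }
  assert (Hs2 : s < d) by (unfold s; pose proof (Rmin_l d (Rmin (r/2) 1)); lra).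
  assert (Hs3 : s < r/2) by (unfold s; pose proof (Rmin_r d (Rmin (r/2) 1));
     pose proof (Rmin_l (r/2) 1); pose proof (Rmin_pos d (Rmin (r/2) 1)); lra).
  assert (Hs4 : s <= 1) by (unfold s; pose proof (Rmin_r d (Rmin (r/2) 1));
     pose proof (Rmin_r (r/2) 1); lra).
  pose proof (Hy s ltac:(lra)) as Hys.
  pose proof (Hinc s (r/2) Hs1 Hs3 ltac:(lra)) as H2.
  pose proof (Rpow_le1 s k ltac:(lra) Hk). pose proof (Rpow_pos s k).
  unfold F in *.
  destruct (Rle_or_lt 0 (D s)).
  - assert (0 <= Rpower s k * D s) by (apply Rmult_le_pos; lra). lra.
  - assert (Rpower s k * D s >= D s) by nra. lra.
Qed.

Lemma contI_gt f g R1 R2 x : cont_on_Ico f R1 -> cont_on_Ico g R2 ->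
  0 <= x -> x < R1 -> x < R2 -> g x < f x ->
  exists d, 0 < d /\ forall y, 0 <= y -> y < R1 -> y < R2 -> Rabs (y - x) < d -> g y < f y.
Proof.
  intros Hf Hg H0 H1 H2 Hlt.
  destruct (Hf x ltac:(lra) ((f x - g x)/2) ltac:(lra)) as [d1 [Hd1 P1]].
  destruct (Hg x ltac:(lra) ((f x - g x)/2) ltac:(lra)) as [d2 [Hd2 P2]].
  exists (Rmin d1 d2); split; [apply Rmin_pos; lra|].
  intros y Hy0 Hy1 Hy2 Hyd.
  pose proof (Rmin_l d1 d2); pose proof (Rmin_r d1 d2).
  pose proof (P1 y ltac:(lra) ltac:(lra)) as Q1.
  pose proof (P2 y ltac:(lra) ltac:(lra)) as Q2.
  apply Rabs_def2 in Q1; apply Rabs_def2 in Q2; lra.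
Qed.

Lemma contI_near f g R1 R2 : cont_on_Ico f R1 -> cont_on_Ico g R2 -> 0 < R1 -> 0 < R2 ->
  forall eps, 0 < eps -> exists d, 0 < d /\ forall y, 0 < y < d ->
    f y - g y > (f 0 - g 0) - eps.
Proof.
  intros Hf Hg H1 H2 eps He.
  destruct (Hf 0 ltac:(lra) (eps/2) ltac:(lra)) as [d1 [Hd1 P1]].
  destruct (Hg 0 ltac:(lra) (eps/2) ltac:(lra)) as [d2 [Hd2 P2]].
  exists (Rmin (Rmin d1 d2) (Rmin R1 R2)); split.
  { apply Rmin_pos; apply Rmin_pos; lra. }
  intros y Hy.
  pose proof (Rmin_l (Rmin d1 d2) (Rmin R1 R2)); pose proof (Rmin_r (Rmin d1 d2) (Rmin R1 R2)).
  pose proof (Rmin_l d1 d2); pose proof (Rmin_r d1 d2).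
  pose proof (Rmin_l R1 R2); pose proof (Rmin_r R1 R2).
  assert (Rabs (y - 0) < d1) by (rewrite Rminus_0_r, Rabs_pos_eq; lra).
  assert (Rabs (y - 0) < d2) by (rewrite Rminus_0_r, Rabs_pos_eq; lra).
  pose proof (P1 y ltac:(lra) ltac:(assumption)) as Q1.
  pose proof (P2 y ltac:(lra) ltac:(assumption)) as Q2.
  apply Rabs_def2 in Q1; apply Rabs_def2 in Q2; lra.
Qed.

Lemma rpow_lt x y p : 0 < p -> 0 <= x -> x < y -> rpow x p < rpow y p.
Proof.
  intros Hp Hx Hxy; unfold rpow.
  destruct (Rle_dec y 0); [lra|].
  destruct (Rle_dec x 0).
  - apply Rpow_pos.
  - apply Rlt_Rpower_l; lra.
Qed.

Lemma rpow_le x y p : 0 < p -> 0 <= x -> x <= y -> rpow x p <= rpow y p.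
Proof.
  intros Hp Hx Hxy; destruct (Req_dec x y) as [->|]; [lra|].
  left; apply rpow_lt; lra.
Qed.

Theorem lemma6p1 (p q theta : R) (R1 R2 : R)
  (w1 v1 psi1 dw1 dv1 dpsi1 w2 v2 psi2 dw2 dv2 dpsi2 : R -> R)
  (mu1 m1 nu1 mu2 m2 nu2 : R)
  (hp : 0 < p) (hq : 0 < q) (htheta : 0 <= theta)
  (hR1 : 0 < R1) (hR2 : 0 < R2)
  (hw1 : admissible w1 dw1 R1) (hv1 : admissible v1 dv1 R1)
  (hpsi1 : admissible psi1 dpsi1 R1)
  (hw2 : admissible w2 dw2 R2) (hv2 : admissible v2 dv2 R2)
  (hpsi2 : admissible psi2 dpsi2 R2)
  (h1a : forall r, 0 < r < R1 -> dw1 r + theta / r * w1 r >= rpow (v1 r) p)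
  (h1b : forall r, 0 < r < R1 -> dv1 r >= psi1 r)
  (h1c : forall r, 0 < r < R1 -> dpsi1 r + theta / r * psi1 r >= rpow (w1 r) q)
  (h2a : forall r, 0 < r < R2 -> dw2 r + theta / r * w2 r <= rpow (v2 r) p)
  (h2b : forall r, 0 < r < R2 -> dv2 r <= psi2 r)
  (h2c : forall r, 0 < r < R2 -> dpsi2 r + theta / r * psi2 r <= rpow (w2 r) q)
  (i1w : w1 0 = mu1) (i1v : v1 0 = m1) (i1p : psi1 0 = nu1)
  (i2w : w2 0 = mu2) (i2v : v2 0 = m2) (i2p : psi2 0 = nu2)
  (hmu1 : 0 <= mu1) (hm1 : 0 <= m1) (hnu1 : 0 <= nu1)
  (hmu2 : 0 <= mu2) (hm2 : 0 <= m2) (hnu2 : 0 <= nu2)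
  (hmu : mu1 >= mu2) (hm : m1 >= m2) (hnu : nu1 >= nu2)
  (hne : (mu1, m1, nu1) <> (mu2, m2, nu2)) :
  forall r, 0 < r < Rmin R1 R2 ->
    w1 r > w2 r /\ v1 r > v2 r /\ psi1 r > psi2 r.
Proof.
  subst mu1 m1 nu1 mu2 m2 nu2.
  destruct hw1 as [nw1 [cw1 [dw1' _]]]. destruct hv1 as [nv1 [cv1 [dv1' _]]].
  destruct hpsi1 as [np1 [cp1 [dp1' _]]].
  destruct hw2 as [nw2 [cw2 [dw2' _]]]. destruct hv2 as [nv2 [cv2 [dv2' _]]].
  destruct hpsi2 as [np2 [cp2 [dp2' _]]].
  set (Rm := Rmin R1 R2).
  assert (hRm : 0 < Rm) by (apply Rmin_pos; lra).
  assert (inR : forall x, 0 <= x < Rm -> 0 <= x < R1 /\ 0 <= x < R2).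
  { intros x Hx; pose proof (Rmin_l R1 R2); pose proof (Rmin_r R1 R2); unfold Rm in *; lra. }
  assert (dW : forall x, 0 < x < Rm -> derivable_pt_lim (fun t => w1 t - w2 t) x (dw1 x - dw2 x)).
  { intros x Hx; destruct (inR x ltac:(lra)).
    apply (derivable_pt_lim_minus w1 w2); [apply dw1'|apply dw2']; lra. }
  assert (dV : forall x, 0 < x < Rm -> derivable_pt_lim (fun t => v1 t - v2 t) x (dv1 x - dv2 x)).
  { intros x Hx; destruct (inR x ltac:(lra)).
    apply (derivable_pt_lim_minus v1 v2); [apply dv1'|apply dv2']; lra. }
  assert (dP : forall x, 0 < x < Rm -> derivable_pt_lim (fun t => psi1 t - psi2 t) x (dpsi1 x - dpsi2 x)).
  { intros x Hx; destruct (inR x ltac:(lra)).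
    apply (derivable_pt_lim_minus psi1 psi2); [apply dp1'|apply dp2']; lra. }
  assert (iW : forall x, 0 < x < Rm -> (dw1 x - dw2 x) + theta / x * (w1 x - w2 x)
                >= rpow (v1 x) p - rpow (v2 x) p).
  { intros x Hx; destruct (inR x ltac:(lra)).
    pose proof (h1a x ltac:(lra)); pose proof (h2a x ltac:(lra)).
    assert (E : theta / x * (w1 x - w2 x) = theta / x * w1 x - theta / x * w2 x) by ring.
    rewrite E; lra. }
  assert (iV : forall x, 0 < x < Rm -> (dv1 x - dv2 x) + 0 / x * (v1 x - v2 x)
                >= psi1 x - psi2 x).
  { intros x Hx; destruct (inR x ltac:(lra)).
    pose proof (h1b x ltac:(lra)); pose proof (h2b x ltac:(lra)).
    assert (E : 0 / x * (v1 x - v2 x) = 0) by (field; lra).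
    rewrite E; lra. }
  assert (iP : forall x, 0 < x < Rm -> (dpsi1 x - dpsi2 x) + theta / x * (psi1 x - psi2 x)
                >= rpow (w1 x) q - rpow (w2 x) q).
  { intros x Hx; destruct (inR x ltac:(lra)).
    pose proof (h1c x ltac:(lra)); pose proof (h2c x ltac:(lra)).
    assert (E : theta / x * (psi1 x - psi2 x) = theta / x * psi1 x - theta / x * psi2 x) by ring.
    rewrite E; lra. }
  assert (nn : forall x, 0 <= x < Rm -> 0 <= w2 x /\ 0 <= v2 x /\ 0 <= psi2 x).
  { intros x Hx; destruct (inR x Hx); split; [|split]; [apply nw2|apply nv2|apply np2]; lra. }
  assert (nW := contI_near w1 w2 R1 R2 cw1 cw2 hR1 hR2).
  assert (nV := contI_near v1 v2 R1 R2 cv1 cv2 hR1 hR2).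
  assert (nP := contI_near psi1 psi2 R1 R2 cp1 cp2 hR1 hR2).
  assert (Hn : forall D : R -> R, D 0 >= 0 ->
     (forall eps, 0 < eps -> exists d, 0 < d /\ forall y, 0 < y < d -> D y > D 0 - eps) ->
     forall eps, 0 < eps -> exists d, 0 < d /\ forall y, 0 < y < d -> D y > - eps).
  { intros D H0 H eps He; destruct (H eps He) as [d [Hd P]]; exists d; split; auto.
    intros y Hy; pose proof (P y Hy); lra. }
  set (P := fun t => w1 t > w2 t /\ v1 t > v2 t /\ psi1 t > psi2 t).
  assert (Hz : exists delta, 0 < delta <= Rm /\ forall t, 0 < t < delta -> P t).
  { assert (wstep : forall delta, 0 < delta <= Rm -> (forall t, 0 < t < delta -> v2 t < v1 t) ->
       forall t, 0 < t < delta -> w1 t - w2 t > 0).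
    { intros delta Hd Hv.
      apply (near0 theta delta (fun t => w1 t - w2 t) (fun t => dw1 t - dw2 t) htheta ltac:(lra)).
      - intros x Hx; apply dW; lra.
      - intros x Hx. pose proof (iW x ltac:(lra)). pose proof (Hv x Hx).
        destruct (nn x ltac:(lra)) as [? [? ?]].
        pose proof (rpow_lt (v2 x) (v1 x) p hp ltac:(lra) ltac:(lra)). lra.
      - apply (Hn (fun t => w1 t - w2 t)); [simpl; lra| exact nW]. }
    assert (vstep : forall delta, 0 < delta <= Rm -> (forall t, 0 < t < delta -> psi2 t < psi1 t) ->
       forall t, 0 < t < delta -> v1 t - v2 t > 0).
    { intros delta Hd Hv.
      apply (near0 0 delta (fun t => v1 t - v2 t) (fun t => dv1 t - dv2 t) ltac:(lra) ltac:(lra)).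
      - intros x Hx; apply dV; lra.
      - intros x Hx. pose proof (iV x ltac:(lra)). pose proof (Hv x Hx). lra.
      - apply (Hn (fun t => v1 t - v2 t)); [simpl; lra| exact nV]. }
    assert (pstep : forall delta, 0 < delta <= Rm -> (forall t, 0 < t < delta -> w2 t < w1 t) ->
       forall t, 0 < t < delta -> psi1 t - psi2 t > 0).
    { intros delta Hd Hv.
      apply (near0 theta delta (fun t => psi1 t - psi2 t) (fun t => dpsi1 t - dpsi2 t) htheta ltac:(lra)).
      - intros x Hx; apply dP; lra.
      - intros x Hx. pose proof (iP x ltac:(lra)). pose proof (Hv x Hx).
        destruct (nn x ltac:(lra)) as [? [? ?]].
        pose proof (rpow_lt (w2 x) (w1 x) q hq ltac:(lra) ltac:(lra)). lra.
      - apply (Hn (fun t => psi1 t - psi2 t)); [simpl; lra| exact nP]. }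
    assert (Hloc : forall f g, cont_on_Ico f R1 -> cont_on_Ico g R2 -> g 0 < f 0 ->
       exists delta, 0 < delta <= Rm /\ forall t, 0 < t < delta -> g t < f t).
    { intros f g Hf Hg H0.
      destruct (contI_gt f g R1 R2 0 Hf Hg ltac:(lra) hR1 hR2 H0) as [d [Hd Q]].
      exists (Rmin d Rm); split.
      - split; [apply Rmin_pos; lra| apply Rmin_r].
      - intros t Ht. pose proof (Rmin_l d Rm); pose proof (Rmin_r d Rm).
        destruct (inR t ltac:(lra)).
        apply Q; try lra. rewrite Rminus_0_r, Rabs_pos_eq; lra. }
    destruct (Rlt_or_le (w2 0) (w1 0)) as [Ha|Ha].
    { destruct (Hloc w1 w2 cw1 cw2 Ha) as [d [Hd Q]]. exists d; split; auto.
      pose proof (pstep d Hd Q) as Q3.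
      assert (Q3' : forall t, 0 < t < d -> psi2 t < psi1 t) by (intros t Ht; pose proof (Q3 t Ht); lra).
      pose proof (vstep d Hd Q3') as Q2.
      intros t Ht; unfold P; pose proof (Q t Ht); pose proof (Q2 t Ht); pose proof (Q3 t Ht); lra. }
    destruct (Rlt_or_le (v2 0) (v1 0)) as [Hb|Hb].
    { destruct (Hloc v1 v2 cv1 cv2 Hb) as [d [Hd Q]]. exists d; split; auto.
      pose proof (wstep d Hd Q) as Q3.
      assert (Q3' : forall t, 0 < t < d -> w2 t < w1 t) by (intros t Ht; pose proof (Q3 t Ht); lra).
      pose proof (pstep d Hd Q3') as Q2.
      intros t Ht; unfold P; pose proof (Q t Ht); pose proof (Q2 t Ht); pose proof (Q3 t Ht); lra. }
    destruct (Rlt_or_le (psi2 0) (psi1 0)) as [Hc|Hc].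
    { destruct (Hloc psi1 psi2 cp1 cp2 Hc) as [d [Hd Q]]. exists d; split; auto.
      pose proof (vstep d Hd Q) as Q3.
      assert (Q3' : forall t, 0 < t < d -> v2 t < v1 t) by (intros t Ht; pose proof (Q3 t Ht); lra).
      pose proof (wstep d Hd Q3') as Q2.
      intros t Ht; unfold P; pose proof (Q t Ht); pose proof (Q2 t Ht); pose proof (Q3 t Ht); lra. }
    exfalso; apply hne.
    assert (E1 : w1 0 = w2 0) by lra. assert (E2 : v1 0 = v2 0) by lra.
    assert (E3 : psi1 0 = psi2 0) by lra.
    rewrite E1, E2, E3; reflexivity. }
  destruct Hz as [delta [Hd HzP]].
  intros r Hr. change (P r).
  set (E := fun x => 0 < x <= r /\ forall t, 0 < t <= x -> P t).
  assert (Hb : bound E) by (exists r; intros x [Hx _]; lra).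
  set (x0 := Rmin (delta/2) r).
  assert (Hx0a : 0 < x0) by (apply Rmin_pos; lra).
  assert (Hx0 : E x0).
  { split; [split; [lra | apply Rmin_r]|].
    intros t Ht; apply HzP. unfold x0 in Ht. pose proof (Rmin_l (delta/2) r). lra. }
  destruct (completeness E Hb (ex_intro _ x0 Hx0)) as [s [Hub Hlub]].
  pose proof (Hub x0 Hx0) as Hs0.
  assert (Hsr : s <= r) by (apply Hlub; intros x [Hx _]; lra).
  assert (C1 : forall t, 0 < t < s -> P t).
  { intros t Ht.
    destruct (classic (exists x, E x /\ t <= x)) as [[x [[Hx1 Hx2] Htx]]|Hno].
    - apply Hx2; lra.
    - exfalso.
      assert (Hu : is_upper_bound E t).
      { intros x Ex; destruct (Rle_or_lt x t) as [h|h]; auto.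
        exfalso; apply Hno; exists x; split; auto; lra. }
      pose proof (Hlub t Hu); lra. }
  assert (C2 : P s).
  { assert (Hh : 0 < s / 2 < s) by lra.
    destruct (C1 (s/2) Hh) as [A1 [A2 A3]].
    unfold P; split; [|split].
    - pose proof (step theta (s/2) s (fun t => w1 t - w2 t) (fun t => dw1 t - dw2 t)
        htheta ltac:(lra) ltac:(lra)) as S.
      simpl in S. apply Rminus_gt. apply S.
      + intros x Hx; apply dW; lra.
      + intros x Hx. pose proof (iW x ltac:(lra)). destruct (C1 x ltac:(lra)) as [_ [B _]].
        destruct (nn x ltac:(lra)) as [? [? ?]].
        pose proof (rpow_le (v2 x) (v1 x) p hp ltac:(lra) ltac:(lra)). lra.
      + lra.
    - pose proof (step 0 (s/2) s (fun t => v1 t - v2 t) (fun t => dv1 t - dv2 t)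
        ltac:(lra) ltac:(lra) ltac:(lra)) as S.
      simpl in S. apply Rminus_gt. apply S.
      + intros x Hx; apply dV; lra.
      + intros x Hx. pose proof (iV x ltac:(lra)). destruct (C1 x ltac:(lra)) as [_ [_ B]].
        lra.
      + lra.
    - pose proof (step theta (s/2) s (fun t => psi1 t - psi2 t) (fun t => dpsi1 t - dpsi2 t)
        htheta ltac:(lra) ltac:(lra)) as S.
      simpl in S. apply Rminus_gt. apply S.
      + intros x Hx; apply dP; lra.
      + intros x Hx. pose proof (iP x ltac:(lra)). destruct (C1 x ltac:(lra)) as [B _].
        destruct (nn x ltac:(lra)) as [? [? ?]].
        pose proof (rpow_le (w2 x) (w1 x) q hq ltac:(lra) ltac:(lra)). lra.
      + lra. }
  destruct (Rlt_or_le s r) as [Hlt|Hge]; [|replace r with s by lra; exact C2].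
  exfalso.
  destruct (inR s ltac:(lra)) as [I1 I2].
  destruct C2 as [G1 [G2 G3]].
  destruct (contI_gt w1 w2 R1 R2 s cw1 cw2 ltac:(lra) ltac:(lra) ltac:(lra) G1) as [d1 [Hd1 Q1]].
  destruct (contI_gt v1 v2 R1 R2 s cv1 cv2 ltac:(lra) ltac:(lra) ltac:(lra) G2) as [d2 [Hd2 Q2]].
  destruct (contI_gt psi1 psi2 R1 R2 s cp1 cp2 ltac:(lra) ltac:(lra) ltac:(lra) G3) as [d3 [Hd3 Q3]].
  set (d := Rmin d1 (Rmin d2 d3)).
  assert (Hdp : 0 < d) by (apply Rmin_pos; [lra| apply Rmin_pos; lra]).
  assert (e1 : d <= d1) by (unfold d; apply Rmin_l).
  assert (e2 : d <= d2) by (unfold d; pose proof (Rmin_r d1 (Rmin d2 d3)); pose proof (Rmin_l d2 d3); lra).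
  assert (e3 : d <= d3) by (unfold d; pose proof (Rmin_r d1 (Rmin d2 d3)); pose proof (Rmin_r d2 d3); lra).
  set (x1 := Rmin (s + d/2) r).
  assert (f1 : x1 <= s + d/2) by (unfold x1; apply Rmin_l).
  assert (f2 : x1 <= r) by (unfold x1; apply Rmin_r).
  assert (Hx1s : s < x1) by (unfold x1; apply Rmin_glb_lt; lra).
  assert (Ex1 : E x1).
  { split; [lra|].
    intros t Ht.
    destruct (Rlt_or_le t s) as [h|h]; [apply C1; lra|].
    destruct (Req_dec t s) as [->|hne']; [repeat split; lra|].
    destruct (inR t ltac:(lra)) as [J1 J2].
    assert (Ha : Rabs (t - s) < d) by (rewrite Rabs_pos_eq; lra).
    unfold P; split; [|split]; [apply Q1|apply Q2|apply Q3]; lra. }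
  pose proof (Hub x1 Ex1); lra.
Qed.
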